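(* Let $L$ be a Lie algebra over a field $F$, $\tilde L=L\otimes_FE$, and let $\Omega\subset\operatorname{Der}(L)\otimes_FE$ be a finite family satisfying (U1) and (U2). Suppose $m\ge1$ and $U_k(\Omega)=0$ (as an operator on $\tilde L$) for every $k\ge m$. (1) If $m\ge2$, then $[aU_{m-1}(\Omega),bU_{m-1}(\Omega)]=0$ for arbitrary $a,b\in\tilde L$. (2) If $m\ge4$, $a\in\tilde L$ has standard decomposition $a=\sum_\pi a_\pi$, and $\Omega'=\{\operatorname{ad}(a_\pi U_{m-1}(\Omega))\}_\pi$, then $U_k(\Omega')=0$ for all $k\ge m-1$.
   Context: $E$ is the commutative associative $F$-algebra without unit generated by $e_1,e_2,\dots$ with relations $e_i^2=0$; its basis is $e_\pi=e_{i_1}\cdots e_{i_r}$ for nonempty finite $\pi=\{i_1<\dots<i_r\}$. $\tilde L=L\otimes_FE$ with $[x\otimes\alpha,y\otimes\beta]=[x,y]\otimes\alpha\beta$; every $a\in\tilde L$ is uniquely $a=\sum_\pi a_\pi$ with $a_\pi\in L\otimes e_\pi$ (standard decomposition). $D=\operatorname{Der}(L)$, $\tilde D=D\otimes E$ acts on $\tilde L$ by derivations, $\tilde D_i=\sum_{\pi\ni i}D\otimes e_\pi$; $\operatorname{ad}(b):x\mapsto[x,b]$ for $b\in\tilde L$ is regarded as an element of $\tilde D$. A finite family $\Omega\subset\tilde D$ satisfies (U1) if each element lies in some $\tilde D_i$, and (U2) if its elements pairwise commute. For a finite family $\Omega$ of pairwise commuting operators, $U_k(\Omega)=\sum d_1\cdots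 d_k$ over all $k$-element subsets $\{d_1,\dots,d_k\}\subseteq\Omega$, $U_0=\mathrm{Id}$. Operators act on the right. *)

(* Defs.v *)
From HB Require Import structures.
From mathcomp Require Import all_boot all_order all_algebra.
From mathcomp Require Import finmap.
Set Implicit Arguments. Unset Strict Implicit. Unset Printing Implicit Defensive.
Import GRing.Theory.
Local Open Scope ring_scope.


Section Defs.
Variables (F : fieldType) (L : lmodType F) (br : L -> L -> L).

Definition lie_alg : Prop :=
  [/\ (forall c x y z, br (c *: x + y) z = c *: br x z + br y z),
      (forall c x y z, br z (c *: x + y) = c *: br z x + br z y),
      (forall x, br x x = 0) &
      (forall x y z, br x (br y z) + br y (br z x) + br z (br x y) = 0)].

Definition is_der (d : L -> L) : Prop :=
  (forall c x y, d (c *: x + y) = c *: d x + d y) /\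
  (forall x y, d (br x y) = br (d x) y + br x (d y)).

(* Elements of L~ = L (x) E: the component at the basis element e_pi
   (pi a nonempty finite subset of nat). *)
Definition til := {fset nat} -> L.
(* Elements of D~ = Der(L) (x) E. *)
Definition dtil := {fset nat} -> L -> L.

(* x is a genuine element of L (x) E: finitely many nonzero components,
   none at the empty set (E has no unit). *)
Definition is_til (x : til) : Prop :=
  x fset0 = 0 /\ exists N : {fset nat}, forall pi, ~~ ((pi `<=` N)%fset) -> x pi = 0.

Definition is_dtil (d : dtil) : Prop :=
  [/\ forall pi, is_der (d pi),
      forall x, d fset0 x = 0 &
      exists N : {fset nat}, forall pi, ~~ ((pi `<=` N)%fset) -> forall x, d pi x = 0].

(* bracket on L~ : [x (x) e_s, y (x) e_t] = [x,y] (x) e_s e_t *)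
Definition brt (x y : til) : til := fun pi =>
  \sum_(s <- fpowerset pi | (s != fset0) && (s != pi)) br (x s) (y (pi `\` s)%fset).

(* right action of D~ on L~ : (x (x) e_s) (d (x) e_t) = x d (x) e_s e_t *)
Definition act (d : dtil) (x : til) : til := fun pi =>
  \sum_(s <- fpowerset pi | (s != fset0) && (s != pi)) d (pi `\` s)%fset (x s).

Definition adt (b : til) : dtil := fun pi x => br x (b pi).

Definition single (pi : {fset nat}) (v : L) : til :=
  fun s => if s == pi then v else 0.

Definition dzero : dtil := fun _ _ => 0.

(* x d_1 ... d_k (operators act on the right) *)
Definition act_seq (ds : seq dtil) (x : til) : til := foldl (fun y d => act d y) x ds.

Definition Uk (k : nat) (Om : seq dtil) (x : til) : til := fun pi =>
  \sum_(S : {set 'I_(size Om)} | #|S| == k)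
     act_seq [seq nth dzero Om (val i) | i <- enum S] x pi.

Definition U1 (Om : seq dtil) : Prop :=
  forall j, (j < size Om)%N ->
    exists i : nat, forall pi, i \notin pi -> forall x, nth dzero Om j pi x = 0.

Definition U2 (Om : seq dtil) : Prop :=
  forall i j, (i < size Om)%N -> (j < size Om)%N -> forall x, is_til x ->
    act (nth dzero Om j) (act (nth dzero Om i) x)
    = act (nth dzero Om i) (act (nth dzero Om j) x).

End Defs.

(* Main.v *)
Require Import Defs.
From mathcomp Require Import all_boot all_order all_algebra.
From mathcomp Require Import finmap.
From mathcomp Require Import zify.
From Stdlib Require Import FunctionalExtensionality.
Local Open Scope ring_scope.

Module Aux.
Import GRing.Theory.

Local Open Scope fset_scope.

Lemma sum_reindex (X Y : eqType) (V : zmodType) (r1 : seq X) (r2 : seq Y)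
  (P1 : pred X) (P2 : pred Y) (h : Y -> X) (G : X -> V) :
  uniq r1 -> uniq r2 ->
  {in [pred y in r2 | P2 y] &, injective h} ->
  (forall y, y \in r2 -> P2 y -> (h y \in r1) && P1 (h y)) ->
  (forall x, x \in r1 -> P1 x -> exists2 y, (y \in r2) && P2 y & x = h y) ->
  \sum_(x <- r1 | P1 x) G x = \sum_(y <- r2 | P2 y) G (h y).
Proof.
move=> u1 u2 hinj h1 h2.
rewrite -big_filter -[RHS]big_filter -(big_map h xpredT).
apply: perm_big; apply: uniq_perm.
- exact: filter_uniq.
- rewrite map_inj_in_uniq ?filter_uniq // => y z; rewrite !mem_filter => /andP[Py ry] /andP[Pz rz].
  by apply: hinj; rewrite inE ?ry ?rz ?Py ?Pz.
move=> x; rewrite mem_filter; apply/idP/idP.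
- move=> /andP[Px rx]; have [y /andP[ry Py] ->] := h2 x rx Px.
  by apply: map_f; rewrite mem_filter Py.
- move=> /mapP[y]; rewrite mem_filter => /andP[Py ry] ->.
  by have /andP[-> ->] := h1 y ry Py.
Qed.

Section Conv.
Variable V : zmodType.
Implicit Types (pi u s t : {fset nat}).

Lemma fP_sub pi u (g : {fset nat} -> V) : u `<=` pi ->
  \sum_(s <- fpowerset u) g s = \sum_(s <- fpowerset pi | s `<=` u) g s.
Proof.
move=> upi; rewrite -[RHS]big_filter.
apply: (@sum_reindex _ _ _ _ _ xpredT xpredT id);
  try (by apply: filter_uniq; apply: fset_uniq); try (by apply: fset_uniq).
- by move=> y z _ _.
- by move=> y; rewrite mem_filter => /andP[yu _] _; rewrite fpowersetE yu.
- move=> x; rewrite fpowersetE => xu _; exists x => //.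
  by rewrite mem_filter fpowersetE xu (fsubset_trans xu upi).
Qed.

Lemma conv3 pi (g : {fset nat} -> {fset nat} -> {fset nat} -> V) :
  \sum_(u <- fpowerset pi) \sum_(s <- fpowerset u) g s (u `\` s) (pi `\` u) =
  \sum_(s <- fpowerset pi) \sum_(t <- fpowerset (pi `\` s)) g s t (pi `\` s `\` t).
Proof.
transitivity (\sum_(u <- fpowerset pi) \sum_(s <- fpowerset pi | s `<=` u)
                 g s (u `\` s) (pi `\` u)).
  by apply: eq_big_seq => u; rewrite fpowersetE => upi; rewrite (@fP_sub pi u _ upi).
rewrite (exchange_big_dep xpredT) //=.
apply: eq_big_seq => s; rewrite fpowersetE => spi.
rewrite (@sum_reindex _ _ _ (fpowerset pi) (fpowerset (pi `\` s)) (fun i => s `<=` i) xpredT (fun t => s `|` t));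
  try (by apply: fset_uniq).
- apply: eq_big_seq => t; rewrite fpowersetCE => /andP[tpi dts].
  f_equal; last by rewrite fsetDDl.
  apply/fsetP => z; rewrite !inE; have := (fdisjointP dts z).
  by case: (z \in s); case: (z \in t) => //= /(_ isT).
- move=> y z; rewrite !inE !fpowersetCE => /andP[/andP[_ dy] _] /andP[/andP[_ dz] _] e.
  apply/fsetP => x; have /fsetP/(_ x) := e; rewrite !inE.
  case: (boolP (x \in s)) => xs //=.
  have /fdisjointP/(_ x) := dy; have /fdisjointP/(_ x) := dz.
  rewrite xs.
  by move=> Hz Hy _; apply/idP/idP => [/Hy|/Hz].
- move=> y; rewrite fpowersetCE => /andP[ypi _] _.
  by rewrite fpowersetE fsubsetUl andbT fsubUset spi.
- move=> x; rewrite fpowersetE => xpi sx; exists (x `\` s).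
    by rewrite fpowersetE andbT fsetSD.
  by apply/fsetP => z; rewrite !inE; case: (boolP (z \in s)) => //= zs; rewrite (fsubsetP sx).
Qed.

Lemma conv_swap A (f : {fset nat} -> {fset nat} -> V) :
  \sum_(t <- fpowerset A) f t (A `\` t) = \sum_(t <- fpowerset A) f (A `\` t) t.
Proof.
rewrite (@sum_reindex _ _ _ (fpowerset A) (fpowerset A) xpredT xpredT (fun t => A `\` t));
  try (by apply: fset_uniq).
- by apply: eq_big_seq => t; rewrite fpowersetE => tA; rewrite fsetDK.
- move=> y z; rewrite !inE !fpowersetE => /andP[yA _] /andP[zA _] e.
  by rewrite -(fsetDK yA) -(fsetDK zA) e.
- by move=> y _ _; rewrite fpowersetE fsubsetDl.
- move=> x; rewrite fpowersetE => xA _; exists (A `\` x).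
    by rewrite fpowersetE fsubsetDl.
  by rewrite fsetDK.
Qed.

End Conv.

Close Scope fset_scope.

Set Implicit Arguments. Unset Strict Implicit.

Section B.
Variables (F : fieldType) (L : lmodType F) (br : L -> L -> L).
Hypothesis HL : lie_alg br.

Local Notation T := (til L).

Lemma brDl x y z : br (x + y) z = br x z + br y z.
Proof. by case: HL => H _ _ _; have := H 1 x y z; rewrite !scale1r. Qed.
Lemma brDr x y z : br z (x + y) = br z x + br z y.
Proof. by case: HL => _ H _ _; have := H 1 x y z; rewrite !scale1r. Qed.
Lemma br0l z : br 0 z = 0.
Proof. have h := brDl 0 0 z; rewrite addr0 in h; apply: (@addrI _ (br 0 z)); by rewrite addr0 -h. Qed.
Lemma br0r z : br z 0 = 0.
Proof. have h := brDr 0 0 z; rewrite addr0 in h; apply: (@addrI _ (br z 0)); by rewrite addr0 -h. Qed.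
Lemma brZl c x z : br (c *: x) z = c *: br x z.
Proof. by case: HL => H _ _ _; have := H c x 0 z; rewrite addr0 br0l addr0. Qed.
Lemma brZr c x z : br z (c *: x) = c *: br z x.
Proof. by case: HL => _ H _ _; have := H c x 0 z; rewrite addr0 br0r addr0. Qed.
Lemma br_suml I (r : seq I) (P : pred I) (f : I -> L) z :
  br (\sum_(i <- r | P i) f i) z = \sum_(i <- r | P i) br (f i) z.
Proof. by apply: (big_morph (fun x => br x z)) => [x y|]; rewrite ?brDl ?br0l. Qed.
Lemma br_sumr I (r : seq I) (P : pred I) (f : I -> L) z :
  br z (\sum_(i <- r | P i) f i) = \sum_(i <- r | P i) br z (f i).
Proof. by apply: (big_morph (fun x => br z x)) => [x y|]; rewrite ?brDr ?br0r. Qed.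

Section Der.
Variable d : L -> L.
Hypothesis Hd : is_der br d.
Lemma derD x y : d (x + y) = d x + d y.
Proof. by case: Hd => H _; have := H 1 x y; rewrite !scale1r. Qed.
Lemma der0 : d 0 = 0.
Proof. have h := derD 0 0; rewrite addr0 in h; apply: (@addrI _ (d 0)); by rewrite addr0 -h. Qed.
Lemma derZ c x : d (c *: x) = c *: d x.
Proof. by case: Hd => H _; have := H c x 0; rewrite addr0 der0 addr0. Qed.
Lemma der_sum I (r : seq I) (P : pred I) (f : I -> L) :
  d (\sum_(i <- r | P i) f i) = \sum_(i <- r | P i) d (f i).
Proof. by apply: (big_morph d) => [x y|]; rewrite ?derD ?der0. Qed.
Lemma der_br x y : d (br x y) = br (d x) y + br x (d y).
Proof. by case: Hd. Qed.
End Der.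

Definition dok (d : dtil L) := (forall pi, is_der br (d pi)) /\ (forall x, d fset0 x = 0).
Definition z0 (x : T) := x fset0 = 0.

Lemma sum_fset0 (V : zmodType) (Q : pred {fset nat}) (G : {fset nat} -> V) :
  \sum_(s <- fpowerset fset0 | (s != fset0) && Q s) G s = 0.
Proof.
rewrite big_seq_cond big1 // => s /andP[]; rewrite fpowersetE fsubset0 => /eqP->.
by rewrite eqxx.
Qed.

Lemma z0_act d x : z0 (act d x).
Proof. exact: sum_fset0. Qed.
Lemma z0_brt x y : z0 (brt br x y).
Proof. exact: sum_fset0. Qed.

Lemma brt_full x y pi : z0 x -> z0 y ->
  brt br x y pi = \sum_(s <- fpowerset pi) br (x s) (y (pi `\` s)%fset).
Proof.
move=> zx zy; rewrite /brt big_mkcond; apply: eq_bigr => s _.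
case: ifP => // /negbT; rewrite negb_and !negbK => /orP[/eqP->|/eqP->].
  by rewrite zx br0l.
by rewrite fsetDv zy br0r.
Qed.

Lemma act_full d x pi : dok d -> z0 x ->
  act d x pi = \sum_(s <- fpowerset pi) d (pi `\` s)%fset (x s).
Proof.
move=> [dd d0] zx; rewrite /act big_mkcond; apply: eq_bigr => s _.
case: ifP => // /negbT; rewrite negb_and !negbK => /orP[/eqP->|/eqP->].
  by rewrite zx der0.
by rewrite fsetDv d0.
Qed.

Lemma act_brt d x y : dok d -> z0 x -> z0 y ->
  act d (brt br x y) = fun pi => brt br (act d x) y pi + brt br x (act d y) pi.
Proof.
move=> dk zx zy; apply: functional_extensionality => pi.
have [dd d0] := dk.
rewrite act_full //; last exact: z0_brt.
rewrite brt_full //; last exact: z0_act.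
rewrite brt_full //; last exact: z0_act.
transitivity (\sum_(u <- fpowerset pi) \sum_(s <- fpowerset u)
   (br (d (pi `\` u)%fset (x s)) (y (u `\` s)%fset) +
    br (x s) (d (pi `\` u)%fset (y (u `\` s)%fset)))).
  apply: eq_bigr => u _; rewrite brt_full // der_sum //.
  by apply: eq_bigr => s _; rewrite der_br.
rewrite (eq_bigr (fun u => \sum_(s <- fpowerset u) br (d (pi `\` u)%fset (x s)) (y (u `\` s)%fset) +
    \sum_(s <- fpowerset u) br (x s) (d (pi `\` u)%fset (y (u `\` s)%fset)))); last first.
  by move=> u _; rewrite big_split.
rewrite big_split /=; congr (_ + _).
  rewrite (@conv3 _ pi (fun s w t => br (d t (x s)) (y w))).
  transitivity (\sum_(v <- fpowerset pi) \sum_(s <- fpowerset v)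
     br (d (v `\` s)%fset (x s)) (y (pi `\` v)%fset)); last first.
    by apply: eq_bigr => v _; rewrite act_full // br_suml.
  rewrite (@conv3 _ pi (fun s t w => br (d t (x s)) (y w))).
  apply: eq_bigr => s _.
  exact: (@conv_swap _ _ (fun t w => br (d w (x s)) (y t))).
rewrite (@conv3 _ pi (fun s w t => br (x s) (d t (y w)))).
apply: eq_bigr => s _; rewrite act_full // br_sumr.
by apply: eq_bigr => r _; rewrite fsetDDl.
Qed.

Definition linT (Phi : T -> T) :=
  (forall x y, Phi (fun pi => x pi + y pi) = fun pi => Phi x pi + Phi y pi) /\
  (forall c x, Phi (fun pi => c *: x pi) = fun pi => c *: Phi x pi).

Lemma linT0 Phi : linT Phi -> Phi (fun _ => 0) = fun _ => 0.
Proof.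
move=> [_ hZ]; have := hZ 0 (fun _ => 0).
have -> : (fun _ : {fset nat} => (0 : F) *: (0 : L)) = fun _ => 0.
  by apply: functional_extensionality => pi; rewrite scale0r.
move=> ->; apply: functional_extensionality => pi; by rewrite scale0r.
Qed.

Lemma linT_sum Phi : linT Phi -> forall I (r : seq I) (P : pred I) (f : I -> T),
  Phi (fun pi => \sum_(i <- r | P i) f i pi) = fun pi => \sum_(i <- r | P i) Phi (f i) pi.
Proof.
move=> hl I r P f; elim: r => [|i r IH].
  have -> : (fun pi => \sum_(i <- [::] | P i) f i pi) = fun _ => 0.
    by apply: functional_extensionality => pi; rewrite big_nil.
  rewrite linT0 //; apply: functional_extensionality => pi; by rewrite big_nil.
case Pi: (P i).
  have -> : (fun pi => \sum_(j <- i :: r | P j) f j pi) =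
            fun pi => f i pi + \sum_(j <- r | P j) f j pi.
    by apply: functional_extensionality => pi; rewrite big_cons Pi.
  rewrite hl.1 IH; apply: functional_extensionality => pi; by rewrite big_cons Pi.
have -> : (fun pi => \sum_(j <- i :: r | P j) f j pi) =
          fun pi => \sum_(j <- r | P j) f j pi.
  by apply: functional_extensionality => pi; rewrite big_cons Pi.
rewrite IH; apply: functional_extensionality => pi; by rewrite big_cons Pi.
Qed.

Lemma linT_lc Phi : linT Phi -> forall I (r : seq I) (P : pred I) (c : I -> F) (f : I -> T),
  Phi (fun pi => \sum_(i <- r | P i) c i *: f i pi) =
  fun pi => \sum_(i <- r | P i) c i *: Phi (f i) pi.
Proof.
move=> hl I r P c f.
have := @linT_sum Phi hl I r P (fun i pi => c i *: f i pi); rewrite /= => ->.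
apply: functional_extensionality => pi; apply: eq_bigr => i _.
by rewrite hl.2.
Qed.

Lemma linT_comp Phi Psi : linT Phi -> linT Psi -> linT (fun x => Psi (Phi x)).
Proof.
move=> [a1 s1] [a2 s2]; split=> [x y|c x]; first by rewrite a1 a2.
by rewrite s1 s2.
Qed.

Lemma linT_id : linT id.
Proof. by []. Qed.

Definition dder (d : dtil L) := forall pi, is_der br (d pi).

Lemma linT_act d : dder d -> linT (act d).
Proof.
move=> dd; split=> [x y|c x]; apply: functional_extensionality => pi; rewrite /act.
  by rewrite -big_split; apply: eq_bigr => s _; rewrite derD.
by rewrite scaler_sumr; apply: eq_bigr => s _; rewrite derZ.
Qed.

Lemma linT_brtl y : linT (fun x => brt br x y).
Proof.
split=> [x x'|c x]; apply: functional_extensionality => pi; rewrite /brt.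
  by rewrite -big_split; apply: eq_bigr => s _; rewrite brDl.
by rewrite scaler_sumr; apply: eq_bigr => s _; rewrite brZl.
Qed.

Lemma linT_brtr x : linT (fun y => brt br x y).
Proof.
split=> [y y'|c y]; apply: functional_extensionality => pi; rewrite /brt.
  by rewrite -big_split; apply: eq_bigr => s _; rewrite brDr.
by rewrite scaler_sumr; apply: eq_bigr => s _; rewrite brZr.
Qed.

Implicit Types (ds : seq (dtil L)) (d : dtil L) (x : T).

Lemma act_seq_cons d ds x : act_seq (d :: ds) x = act_seq ds (act d x).
Proof. by []. Qed.

Lemma act_seq_cat ds1 ds2 x : act_seq (ds1 ++ ds2) x = act_seq ds2 (act_seq ds1 x).
Proof. by rewrite /act_seq foldl_cat. Qed.

Lemma act_seq_rcons ds d x : act_seq (rcons ds d) x = act d (act_seq ds x).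
Proof. by rewrite -cats1 act_seq_cat. Qed.

Fixpoint alld ds : Prop := if ds is d :: ds' then dder d /\ alld ds' else True.

Lemma linT_act_seq ds : alld ds -> linT (act_seq ds).
Proof.
elim: ds => [|d ds IH] /= hd; first exact: linT_id.
have -> : act_seq (d :: ds) = fun x => act_seq ds (act d x) by [].
by apply: linT_comp; [apply: linT_act; case: hd | apply: IH; case: hd].
Qed.

End B.

Set Implicit Arguments. Unset Strict Implicit.

Lemma sub_split (pi s A B : {fset nat}) :
  (s `<=` A)%fset -> (pi `\` s `<=` B)%fset -> (pi `<=` A `|` B)%fset.
Proof.
move=> /fsubsetP sA /fsubsetP dB; apply/fsubsetP => z zpi; rewrite inE.
case: (boolP (z \in s)) => zs; first by rewrite sA.
by rewrite dB ?orbT // inE zs.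
Qed.

Section C1.
Variables (F : fieldType) (L : lmodType F) (br : L -> L -> L).
Hypothesis HL : lie_alg br.
Local Notation T := (til L).
Implicit Types (ds : seq (dtil L)) (d : dtil L) (x y : T).

Lemma is_til_act d x : is_dtil br d -> is_til x -> is_til (act d x).
Proof.
move=> [dd d0 [Nd hNd]] [x0 [Nx hNx]]; split; first exact: z0_act.
exists (Nx `|` Nd)%fset => pi hpi.
rewrite /act big_seq_cond big1 // => s /andP[]; rewrite fpowersetE => spi _.
case: (boolP (s `<=` Nx)%fset) => sN; last by rewrite hNx // (der0 (dd _)).
rewrite hNd //; apply: contra hpi => h; exact: sub_split sN h.
Qed.

Lemma is_til_brt x y : is_til x -> is_til y -> is_til (brt br x y).
Proof.
move=> [x0 [Nx hNx]] [y0 [Ny hNy]]; split; first exact: z0_brt.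
exists (Nx `|` Ny)%fset => pi hpi.
rewrite /brt big_seq_cond big1 // => s /andP[]; rewrite fpowersetE => spi _.
case: (boolP (s `<=` Nx)%fset) => sN; last by rewrite hNx // (br0l HL).
rewrite hNy ?(br0r HL) //; apply: contra hpi => h; exact: sub_split sN h.
Qed.

Lemma is_til0 : is_til (fun _ => 0 : L).
Proof. by split=> //; exists fset0. Qed.

Lemma is_til_add x y : is_til x -> is_til y -> is_til (fun pi => x pi + y pi).
Proof.
move=> [x0 [Nx hNx]] [y0 [Ny hNy]]; split; first by rewrite /= x0 y0 addr0.
exists (Nx `|` Ny)%fset => pi hpi.
rewrite hNx ?hNy ?addr0 //; apply: contra hpi => h.
  by apply: fsubset_trans h (fsubsetUr _ _).
by apply: fsubset_trans h (fsubsetUl _ _).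
Qed.

Lemma is_til_scale c x : is_til x -> is_til (fun pi => c *: x pi).
Proof.
move=> [x0 [Nx hNx]]; split; first by rewrite /= x0 scaler0.
by exists Nx => pi hpi; rewrite hNx ?scaler0.
Qed.

Lemma is_til_sum I (r : seq I) (P : pred I) (c : I -> F) (f : I -> T) :
  (forall i, P i -> is_til (f i)) ->
  is_til (fun pi => \sum_(i <- r | P i) c i *: f i pi).
Proof.
move=> hf; elim: r => [|i r IH].
  by split; [rewrite big_nil | exists fset0 => pi _; rewrite big_nil].
case Pi: (P i).
  have -> : (fun pi => \sum_(j <- i :: r | P j) c j *: f j pi) =
            fun pi => c i *: f i pi + \sum_(j <- r | P j) c j *: f j pi.
    by apply: functional_extensionality => pi; rewrite big_cons Pi.
  by apply: is_til_add => //; apply: is_til_scale; apply: hf.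
have -> : (fun pi => \sum_(j <- i :: r | P j) c j *: f j pi) =
          fun pi => \sum_(j <- r | P j) c j *: f j pi.
  by apply: functional_extensionality => pi; rewrite big_cons Pi.
exact: IH.
Qed.

Lemma is_til_sum1 I (r : seq I) (P : pred I) (f : I -> T) :
  (forall i, P i -> is_til (f i)) ->
  is_til (fun pi => \sum_(i <- r | P i) f i pi).
Proof.
move=> hf; have := is_til_sum r (fun _ => 1) hf.
have -> // : (fun pi => \sum_(i <- r | P i) (fun _ => 1) i *: f i pi) =
         (fun pi => \sum_(i <- r | P i) f i pi).
by apply: functional_extensionality => pi; apply: eq_bigr => i _; rewrite scale1r.
Qed.

Definition supp_has (i : nat) x := forall pi, i \notin pi -> x pi = 0.
Definition dsupp (i : nat) d := forall pi, i \notin pi -> forall z, d pi z = 0.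

Lemma supp_act_new d i x : dsupp i d -> supp_has i (act d x).
Proof.
move=> hd pi ipi; rewrite /act big1 // => s _; apply: hd; by apply: contra ipi => /fsetDP [].

Qed.

Lemma supp_act_keep d i x : dder br d -> supp_has i x -> supp_has i (act d x).
Proof.
move=> dd hx pi ipi; rewrite /act big_seq_cond big1 // => s /andP[].
rewrite fpowersetE => /fsubsetP spi _; rewrite hx ?(der0 (dd _)) //.
by apply: contra ipi => /spi.
Qed.

Lemma supp_act_kill d i x : dder br d -> dsupp i d -> supp_has i x ->
  act d x = fun _ => 0.
Proof.
move=> dd hd hx; apply: functional_extensionality => pi.
rewrite /act big1 // => s _.
case: (boolP (i \in s)) => iis; last by rewrite hx ?(der0 (dd _)).
by rewrite hd //; apply/negP => /fsetDP [_]; rewrite iis.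
Qed.

Lemma supp_act_seq_keep ds i x : alld br ds -> supp_has i x ->
  supp_has i (act_seq ds x).
Proof.
elim: ds x => [|d ds IH] x //= [dd hds] hx.
by apply: (IH (act d x)) => //; apply: supp_act_keep.
Qed.

Lemma supp_brt_kill i x y : supp_has i x -> supp_has i y ->
  brt br x y = fun _ => 0.
Proof.
move=> hx hy; apply: functional_extensionality => pi.
rewrite /brt big1 // => s _.
case: (boolP (i \in s)) => iis; last by rewrite hx ?(br0l HL).
by rewrite hy ?(br0r HL) //; apply/negP => /fsetDP [_]; rewrite iis.
Qed.

End C1.

Set Implicit Arguments. Unset Strict Implicit.

Section D.
Variables (F : fieldType) (L : lmodType F) (br : L -> L -> L).
Hypothesis HL : lie_alg br.
Variable Om : seq (dtil L).
Hypothesis HOm : forall j, (j < size Om)%N -> is_dtil br (nth (@dzero _ L) Om j).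
Hypothesis HU1 : U1 Om.
Hypothesis HU2 : U2 Om.
Local Notation T := (til L).
Local Notation n := (size Om).
Local Notation I := 'I_(size Om).
Implicit Types (x y : T) (l : seq I) (A B S : {set I}).

Definition dj (j : I) := nth (@dzero _ L) Om j.
Definition DS S x := act_seq [seq dj i | i <- enum S] x.

Lemma dtil_dj j : is_dtil br (dj j). Proof. exact: HOm (ltn_ord j). Qed.
Lemma dder_dj j : dder br (dj j). Proof. by case: (dtil_dj j). Qed.
Lemma dok_dj j : dok br (dj j). Proof. by case: (dtil_dj j). Qed.
Lemma alld_map l : alld br (map dj l).
Proof. by elim: l => //= j l IH; split=> //; apply: dder_dj. Qed.

Lemma is_til_act_seq l x : is_til x -> is_til (act_seq (map dj l) x).
Proof.
elim: l x => [|j l IH] x hx //=.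
by apply: (IH (act (dj j) x)); apply: is_til_act => //; apply: dtil_dj.
Qed.

Lemma is_til_DS S x : is_til x -> is_til (DS S x).
Proof. exact: is_til_act_seq. Qed.

Lemma Uk_DS k x : Uk k Om x = fun pi => \sum_(S : {set I} | #|S| == k) DS S x pi.
Proof. by []. Qed.

Lemma is_til_Uk k x : is_til x -> is_til (Uk k Om x).
Proof. by move=> hx; rewrite Uk_DS; apply: is_til_sum1 => S _; apply: is_til_DS. Qed.

Lemma linT_DS S : linT (DS S).
Proof. exact: linT_act_seq (alld_map _). Qed.

Lemma linT_Uk k : linT (Uk k Om).
Proof.
split=> [x y|c x]; rewrite !Uk_DS; apply: functional_extensionality => pi.
  by rewrite -big_split; apply: eq_bigr => S _; rewrite (linT_DS S).1.
by rewrite scaler_sumr; apply: eq_bigr => S _; rewrite (linT_DS S).2.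
Qed.

Lemma front l j x : is_til x -> j \in l ->
  act_seq (map dj l) x = act_seq (map dj (rem j l)) (act (dj j) x).
Proof.
elim: l x => [|y l IH] x hx //.
case: (eqVneq y j) => [-> _|ne]; first by rewrite /= eqxx.
rewrite inE eq_sym (negbTE ne) /= => jl; rewrite (negbTE ne) /=.
have hy : is_til (act (dj y) x) by apply: is_til_act => //; apply: dtil_dj.
rewrite (IH (act (dj y) x) hy jl) /=.
congr act_seq; exact: HU2 (ltn_ord y) (ltn_ord j) x hx.
Qed.

Lemma act_seq_perm l1 l2 x : is_til x -> perm_eq l1 l2 ->
  act_seq (map dj l1) x = act_seq (map dj l2) x.
Proof.
elim: l1 l2 x => [|j l1 IH] l2 x hx pe.
  by move: pe; rewrite perm_sym => /perm_nilP ->.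
have jl2 : j \in l2 by rewrite -(perm_mem pe) inE eqxx.
rewrite (front hx jl2) /=; apply: IH; first by apply: is_til_act => //; apply: dtil_dj.
by rewrite -(perm_cons j); apply: perm_trans pe _; apply: perm_to_rem.
Qed.

Lemma DS0 x : DS set0 x = x.
Proof. by rewrite /DS enum_set0. Qed.

Lemma DS_add S j x : is_til x -> j \notin S -> DS (j |: S) x = act (dj j) (DS S x).
Proof.
move=> hx jS; rewrite /DS -act_seq_rcons -map_rcons; apply: act_seq_perm => //.
apply: uniq_perm; rewrite ?enum_uniq ?rcons_uniq ?mem_enum ?jS ?enum_uniq //.
by move=> z; rewrite mem_rcons mem_enum !inE mem_enum.
Qed.

Lemma DS_union A B x : is_til x -> [disjoint A & B] -> DS B (DS A x) = DS (A :|: B) x.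
Proof.
move=> hx dAB; rewrite /DS -act_seq_cat -map_cat; apply: act_seq_perm => //.
apply: uniq_perm; rewrite ?enum_uniq //.
  rewrite cat_uniq !enum_uniq /= andbT; apply/hasPn => z; rewrite !mem_enum => zB.
  by rewrite (disjointFl dAB zB).
by move=> z; rewrite mem_cat !mem_enum inE.
Qed.

Lemma dsupp_dj j : exists i, dsupp i (dj j).
Proof.
have [i hi] := HU1 (ltn_ord j); exists i => pi ipi z; exact: hi.
Qed.

Lemma supp_list l j i x : dsupp i (dj j) -> j \in l -> supp_has i (act_seq (map dj l) x).
Proof.
move=> hd; elim: l x => [|y l IH] x //; rewrite inE => /orP[/eqP <-|jl] /=.
  apply: supp_act_seq_keep; first exact: alld_map.
  exact: supp_act_new.
exact: IH.
Qed.

Lemma kill_list l j i x : dsupp i (dj j) -> j \in l -> supp_has i x ->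
  act_seq (map dj l) x = fun _ => 0.
Proof.
move=> hd; elim: l x => [|y l IH] x //; rewrite inE => /orP[/eqP <-|jl] hx /=.
  rewrite (supp_act_kill (dder_dj j) hd hx).
  exact: linT0 (linT_act_seq (alld_map l)).
by apply: IH => //; apply: supp_act_keep => //; apply: dder_dj.
Qed.

Lemma DS_overlap A B x j : j \in A -> j \in B -> DS B (DS A x) = fun _ => 0.
Proof.
move=> jA jB; have [i hi] := dsupp_dj j.
apply: (kill_list (l := enum B) hi); first by rewrite mem_enum.
by apply: (supp_list _ hi); rewrite mem_enum.
Qed.

Lemma brt_overlap A B x y j : j \in A -> j \in B -> brt br (DS A x) (DS B y) = fun _ => 0.
Proof.
move=> jA jB; have [i hi] := dsupp_dj j.
by apply: (supp_brt_kill HL (i := i)); apply: supp_list hi _; rewrite mem_enum.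
Qed.

End D.

Set Implicit Arguments. Unset Strict Implicit.

Section Sets.
Variable n : nat.
Local Notation I := 'I_n.
Implicit Types (A B S : {set I}).

Lemma sum_subU1 (V : zmodType) S j (G : {set I} -> V) : j \notin S ->
  \sum_(A : {set I} | A \subset j |: S) G A = \sum_(A : {set I} | A \subset S) (G (j |: A) + G A).
Proof.
move=> jS; rewrite big_split /= addrC (bigID (fun A => j \in A)) /= addrC.
congr (_ + _).
  apply: eq_bigl => A; apply/idP/idP.
    move=> /andP[/subsetP h jA]; apply/subsetP => z zA.
    by have := h z zA; case/setU1P => [zj|//]; move: jA; rewrite -zj zA.
  move=> /subsetP h; rewrite (subset_trans _ (subsetU1 j S)) /=; last exact/subsetP.
  by apply/negP => /h; rewrite (negbTE jS).
rewrite (reindex_onto (fun A => j |: A) (fun A => A :\ j)) /=; last first.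
  by move=> A /andP[_ jA]; rewrite setD1K.
apply: eq_bigl => A; apply/idP/idP.
  move=> /andP[/andP[/subsetP h _] /eqP e]; apply/subsetP => z zA.
  have zj : z != j by apply/eqP => zj; move: zA; rewrite -e zj !inE eqxx.
  by have := h z; rewrite !inE zA orbT (negbTE zj) => /(_ isT).
move=> /subsetP h.
have jA : j \notin A by apply/negP => /h; rewrite (negbTE jS).
rewrite setU1K // eqxx andbT setU11 andbT.
apply/subsetP => z; rewrite !inE => /orP[->//|/h ->]; by rewrite orbT.
Qed.

Lemma pair_reindex (V : zmodType) (G : {set I} -> {set I} -> V) N i : (i <= N)%N ->
  \sum_(A : {set I} | #|A| == i) \sum_(B : {set I} | (#|B| == N - i)%N && [disjoint A & B]) G A B =
  \sum_(S : {set I} | #|S| == N) \sum_(A : {set I} | (A \subset S) && (#|A| == i)) G A (S :\: A).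
Proof.
move=> iN.
transitivity (\sum_(A : {set I} | #|A| == i) \sum_(S : {set I} | (A \subset S) && (#|S| == N)) G A (S :\: A)).
  apply: eq_bigr => A /eqP cA.
  rewrite (reindex_onto (fun S => S :\: A) (fun B => A :|: B)) /=; last first.
    move=> B /andP[_ dAB]; apply/setP => z; rewrite !inE.
    case: (boolP (z \in A)) => zA //=.
    by rewrite (disjointFr dAB zA).
  apply: eq_bigl => S; apply/idP/idP.
    move=> /andP[/andP[cD _] /eqP e].
    have AS : A \subset S by rewrite -e subsetUl.
    rewrite AS /=; move: cD; rewrite cardsDS // cA => /eqP h.
    apply/eqP; have := leq_subr i #|S|.
    have : (i <= #|S|)%N by rewrite -cA subset_leq_card.
    by move=> h1 _; rewrite -(subnK h1) h subnK.
  move=> /andP[AS /eqP cS].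
  rewrite cardsDS // cA cS eqxx /=.
  apply/andP; split.
    by rewrite -setI_eq0; apply/eqP/setP => z; rewrite !inE; case: (z \in A); rewrite ?andbF.
  apply/eqP/setP => z; rewrite !inE; case: (boolP (z \in A)) => zA //=.
  by rewrite (subsetP AS).
rewrite (exchange_big_dep (fun S => #|S| == N)) /=; last by move=> A S _ /andP[].
apply: eq_bigr => S cS; apply: eq_bigl => A.
by rewrite cS andbT andbC.
Qed.

End Sets.

Section E.
Variables (F : fieldType) (L : lmodType F) (br : L -> L -> L).
Hypothesis HL : lie_alg br.
Variable Om : seq (dtil L).
Hypothesis HOm : forall j, (j < size Om)%N -> is_dtil br (nth (@dzero _ L) Om j).
Hypothesis HU1 : U1 Om.
Hypothesis HU2 : U2 Om.
Local Notation T := (til L).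
Local Notation I := 'I_(size Om).
Implicit Types (x y : T) (A B S : {set I}).

Lemma z0_til x : is_til x -> z0 x. Proof. by case. Qed.

Lemma DS_leib S x y : is_til x -> is_til y ->
  DS S (brt br x y) =
  fun pi => \sum_(A : {set I} | A \subset S) brt br (DS A x) (DS (S :\: A) y) pi.
Proof.
move=> hx hy; move: {2}#|S| (erefl #|S|) => k; elim: k S => [|k IH] S cS.
  have -> : S = set0 by apply: cards0_eq.
  rewrite DS0; apply: functional_extensionality => pi.
  rewrite (big_pred1 set0); last by move=> A; rewrite subset0.
  by rewrite setDv !DS0.
have [j jS] : exists j, j \in S by apply/set0Pn; rewrite -cards_eq0 cS.
set S0 := S :\ j.
have jS0 : j \notin S0 by rewrite setD11.
have cS0 : #|S0| = k by move: cS; rewrite (cardsD1 j S) jS => -[].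
have eS : S = j |: S0 by rewrite setD1K.
have htb : is_til (brt br x y) by apply: is_til_brt.
rewrite eS (DS_add HOm HU2 htb jS0) (IH _ cS0).
have := linT_sum (linT_act (dder_dj HOm j)) (index_enum _) (fun A => A \subset S0)
  (fun A => brt br (DS A x) (DS (S0 :\: A) y)); move=> /= ->.
apply: functional_extensionality => pi; rewrite sum_subU1 //.
apply: eq_bigr => A AS0.
have jA : j \notin A by apply: contra jS0; apply: (subsetP AS0).
have hA := is_til_DS HOm A hx.
have hB := is_til_DS HOm (S0 :\: A) hy.
rewrite (act_brt HL (dok_dj HOm j) (z0_til hA) (z0_til hB)).
have e1 : (j |: S0) :\: (j |: A) = S0 :\: A.
  apply/setP => z; rewrite !inE; case: (eqVneq z j) => [->|] //=.
  by rewrite ?andbF.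
have e2 : (j |: S0) :\: A = j |: (S0 :\: A).
  apply/setP => z; rewrite !inE; case: (eqVneq z j) => [->|] //=.
  by rewrite ?(negbTE jA).
have jB : j \notin S0 :\: A by rewrite inE (negbTE jS0) andbF.
by rewrite e1 e2 (DS_add HOm HU2 hx jA) (DS_add HOm HU2 hy jB).
Qed.

Lemma brt_UU i j x y pi :
  brt br (Uk i Om x) (Uk j Om y) pi =
  \sum_(A : {set I} | #|A| == i) \sum_(B : {set I} | #|B| == j)
     brt br (DS A x) (DS B y) pi.
Proof.
have e1 : brt br (Uk i Om x) (Uk j Om y) =
          fun pi => \sum_(A : {set I} | #|A| == i) brt br (DS A x) (Uk j Om y) pi.
  exact: (linT_sum (linT_brtl HL (Uk j Om y)) (index_enum _) (fun A : {set I} => #|A| == i)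
           (fun A => DS A x)).
rewrite e1; apply: eq_bigr => A _.
exact: (congr1 (fun X => X pi) (linT_sum (linT_brtr HL (DS A x)) (index_enum _)
           (fun B : {set I} => #|B| == j) (fun B => DS B y))).
Qed.

Lemma Uk_leib N x y : is_til x -> is_til y ->
  Uk N Om (brt br x y) =
  fun pi => \sum_(i < N.+1) brt br (Uk i Om x) (Uk (N - i)%N Om y) pi.
Proof.
move=> hx hy; apply: functional_extensionality => pi.
rewrite Uk_DS.
transitivity (\sum_(S : {set I} | #|S| == N) \sum_(A : {set I} | A \subset S)
                 brt br (DS A x) (DS (S :\: A) y) pi).
  by apply: eq_bigr => S _; rewrite DS_leib.
transitivity (\sum_(i < N.+1) \sum_(S : {set I} | #|S| == N)
   \sum_(A : {set I} | (A \subset S) && (#|A| == i)) brt br (DS A x) (DS (S :\: A) y) pi);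
  last first.
  apply: eq_bigr => i _; rewrite brt_UU.
  rewrite -(pair_reindex (fun A B => brt br (DS A x) (DS B y) pi) (leq_ord i)).
  apply: eq_bigr => A _.
  rewrite [RHS](bigID (fun B => [disjoint A & B])) /= [X in _ = _ + X]big1 ?addr0 //.
  move=> B /andP[_ nd]; have /set0Pn [j] : A :&: B != set0 by rewrite setI_eq0.
  rewrite inE => /andP[jA jB].
  by rewrite (brt_overlap HL HOm HU1 x y jA jB).
rewrite exchange_big /=; apply: eq_bigr => S /eqP cS.
rewrite (exchange_big_dep (fun A : {set I} => A \subset S)) /=; last by move=> i A _ /andP[].
apply: eq_bigr => A AS.
have cA : (#|A| < N.+1)%N by rewrite ltnS -cS subset_leq_card.
rewrite (big_pred1 (Ordinal cA)) //.
by move=> i; rewrite AS /= -val_eqE /= eq_sym.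
Qed.

Lemma UU_DS i j x pi : is_til x -> (i <= j)%N ->
  Uk (j - i)%N Om (Uk i Om x) pi =
  \sum_(S : {set I} | #|S| == j) DS S x pi *+ 'C(j, i).
Proof.
move=> hx ij.
transitivity (\sum_(B : {set I} | #|B| == (j - i)%N) \sum_(A : {set I} | #|A| == i)
                DS B (DS A x) pi).
  apply: eq_bigr => B _.
  exact: (congr1 (fun X => X pi) (linT_sum (linT_DS HOm B) (index_enum _)
           (fun A : {set I} => #|A| == i) (fun A => DS A x))).
rewrite exchange_big /=.
transitivity (\sum_(A : {set I} | #|A| == i)
   \sum_(B : {set I} | (#|B| == (j - i)%N)%N && [disjoint A & B]) DS (A :|: B) x pi).
  apply: eq_bigr => A _.
  rewrite (bigID (fun B => [disjoint A & B])) /= [X in _ + X = _]big1 ?addr0.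
    by apply: eq_bigr => B /andP[_ dAB]; rewrite (DS_union HOm HU2 hx dAB).
  move=> B /andP[_ nd]; have /set0Pn [k] : A :&: B != set0 by rewrite setI_eq0.
  rewrite inE => /andP[kA kB].
  by rewrite (DS_overlap HOm HU1 x kA kB).
rewrite (pair_reindex (fun A B => DS (A :|: B) x pi) ij).
apply: eq_bigr => S /eqP cS.
transitivity (\sum_(A : {set I} | (A \subset S) && (#|A| == i)) DS S x pi).
  apply: eq_bigr => A /andP[AS _]; congr (DS _ x pi).
  apply/setP => z; rewrite !inE; case: (boolP (z \in A)) => zA //=.
  by rewrite (subsetP AS).
rewrite (eq_bigl (fun A => A \in [set A : {set I} | A \subset S & #|A| == i])); last first.
  by move=> A; rewrite inE.
by rewrite sumr_const cards_draws cS.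
Qed.

Lemma Uk_inv N x pi : is_til x -> (0 < N)%N ->
  \sum_(i < N.+1) (-1) ^+ i *: Uk (N - i)%N Om (Uk i Om x) pi = 0.
Proof.
move=> hx N0.
transitivity (\sum_(i < N.+1) \sum_(S : {set I} | #|S| == N)
                 ((-1) ^+ i *+ 'C(N, i)) *: DS S x pi).
  apply: eq_bigr => i _; rewrite (UU_DS pi hx (leq_ord i)) scaler_sumr.
  by apply: eq_bigr => S _; rewrite -scalerMnl scalerMnr.
rewrite exchange_big /= big1 // => S _.
rewrite -scaler_suml.
have -> : \sum_(i < N.+1) (-1) ^+ i *+ 'C(N, i) = (1 - 1 : F) ^+ N.
  rewrite exprBn; apply: eq_bigr => i _; by rewrite !expr1n !mulr1.
by rewrite subrr expr0n eqn0Ngt N0 /= scale0r.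
Qed.

End E.

Set Implicit Arguments. Unset Strict Implicit.

Lemma tri (V : zmodType) N (f : nat -> nat -> V) :
  \sum_(j < N.+1) \sum_(i < (N - j).+1) f i j =
  \sum_(i < N.+1) \sum_(j < (N - i).+1) f i j.
Proof.
transitivity (\sum_(j < N.+1) \sum_(i < N.+1 | (i + j <= N)%N) f i j).
  apply: eq_bigr => j _; rewrite (big_ord_widen N.+1 (fun i => f i j)); last by lia.
  by apply: eq_bigl => i; have := ltn_ord j; have := ltn_ord i; move=> h1 h2; apply/idP/idP => h; lia.
rewrite (exchange_big_dep xpredT) //=; apply: eq_bigr => i _.
rewrite (big_ord_widen N.+1 (fun j => f i j)); last by lia.
by apply: eq_bigl => j; have := ltn_ord j; have := ltn_ord i; move=> h1 h2; apply/idP/idP => h; lia.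
Qed.

Section F.
Variables (F : fieldType) (L : lmodType F) (br : L -> L -> L).
Hypothesis HL : lie_alg br.
Variable Om : seq (dtil L).
Hypothesis HOm : forall j, (j < size Om)%N -> is_dtil br (nth (@dzero _ L) Om j).
Hypothesis HU1 : U1 Om.
Hypothesis HU2 : U2 Om.
Variable m : nat.
Hypothesis Hm : (1 <= m)%N.
Hypothesis HU : forall k, (m <= k)%N -> forall x, is_til x -> forall pi, Uk k Om x pi = 0.
Local Notation T := (til L).
Local Notation I := 'I_(size Om).
Implicit Types (x y : T).

Lemma Uk_zero k x : (m <= k)%N -> is_til x -> Uk k Om x = fun _ => 0.
Proof. by move=> mk hx; apply: functional_extensionality => pi; apply: HU. Qed.

Lemma brt0l y : brt br (fun _ => 0) y = fun _ => 0.
Proof. exact: linT0 (linT_brtl HL y). Qed.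
Lemma brt0r y : brt br y (fun _ => 0) = fun _ => 0.
Proof. exact: linT0 (linT_brtr HL y). Qed.

Lemma Uk0 x : Uk 0 Om x = x.
Proof.
rewrite Uk_DS; apply: functional_extensionality => pi.
rewrite (big_pred1 set0); last by move=> S; rewrite cards_eq0.
by rewrite DS0.
Qed.

Lemma Uk_leib' N x y : is_til x -> is_til y ->
  Uk N Om (brt br x y) =
  fun pi => \sum_(j < N.+1) brt br (Uk (N - j)%N Om x) (Uk j Om y) pi.
Proof.
move=> hx hy; rewrite (Uk_leib HL HOm HU1 HU2 N hx hy).
apply: functional_extensionality => pi.
rewrite (reindex_inj rev_ord_inj) /=; apply: eq_bigr => i _.
by rewrite subnS subSKn subKn // -ltnS.
Qed.

Theorem part1 : (2 <= m)%N -> forall a b : T, is_til a -> is_til b ->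
  forall pi, brt br (Uk m.-1 Om a) (Uk m.-1 Om b) pi = 0.
Proof.
move=> m2 a b ha hb pi.
set N := (m.-1 + m.-1)%N.
have hN : (m <= N)%N by rewrite /N; lia.
have := HU hN (is_til_brt HL ha hb) pi.
rewrite (Uk_leib HL HOm HU1 HU2 N ha hb) /=.
have mN : (m.-1 < N.+1)%N by rewrite /N; lia.
rewrite (bigD1 (Ordinal mN)) //= (_ : (N - m.-1)%N = m.-1); last by rewrite /N; lia.
rewrite big1 ?addr0 // => i /= ne.
case: (leqP m i) => mi.
  by rewrite (Uk_zero mi ha) brt0l.
have : (m <= N - i)%N.
  have : (i : nat) != m.-1 by move: ne; rewrite -val_eqE.
  by move: mi; rewrite /N; lia.
by move=> h; rewrite (Uk_zero h hb) brt0r.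
Qed.

Definition chain x (bs : seq T) : T := foldl (fun y b => brt br y b) x bs.

Lemma chain_rcons x bs b : chain x (rcons bs b) = brt br (chain x bs) b.
Proof. by rewrite /chain foldl_rcons. Qed.

Lemma act_seq_adt bs x : act_seq (map (adt br) bs) x = chain x bs.
Proof. by elim: bs x => [|b bs IH] x //=; rewrite act_seq_cons IH. Qed.

Fixpoint alltil (bs : seq T) : Prop :=
  if bs is b :: bs' then is_til b /\ alltil bs' else True.

Lemma alltil_rev bs : alltil bs -> alltil (rev bs).
Proof.
suff h : forall l1 l2, alltil l1 -> alltil l2 -> alltil (catrev l1 l2).
  by move=> hb; apply: h.
by elim=> [|b l1 IH] l2 //= [hb h1] h2; apply: IH.
Qed.

Lemma is_til_chain x bs : is_til x -> alltil bs -> is_til (chain x bs).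
Proof.
elim: bs x => [|b bs IH] x //= hx [hb hbs].
by apply: IH => //; apply: is_til_brt.
Qed.

Lemma chain0 bs : chain (fun _ => 0) bs = fun _ => 0.
Proof. by elim: bs => [|b bs IH] //=; rewrite brt0l. Qed.

Fixpoint Yf (N : nat) x (rs : seq T) : T :=
  if rs is a :: rs' then
    fun pi => \sum_(j < N.+1) brt br (Yf (N - j)%N x rs') (Uk j Om a) pi
  else if N == 0%N then x else fun _ => 0.

Lemma Yf_G rs N x : is_til x -> alltil rs ->
  Yf N x rs = fun pi => \sum_(i < N.+1)
     (-1) ^+ i *: Uk (N - i)%N Om (chain (Uk i Om x) (rev rs)) pi.
Proof.
move=> hx; elim: rs N => [|a rs IH] N /=.
  move=> _; apply: functional_extensionality => pi.
  case: N => [|N] /=.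
    by rewrite big_ord1 /= expr0 scale1r !Uk0.
  by rewrite (Uk_inv HOm HU1 HU2 pi hx).
move=> [ha hrs]; apply: functional_extensionality => pi.
transitivity (\sum_(j < N.+1) \sum_(i < (N - j).+1)
   (-1) ^+ i *: brt br (Uk (N - j - i)%N Om (chain (Uk i Om x) (rev rs))) (Uk j Om a) pi).
  apply: eq_bigr => j _; rewrite IH //.
  exact: (congr1 (fun X => X pi) (linT_lc (linT_brtl HL (Uk j Om a)) (index_enum _) xpredT
     (fun i : 'I_(N - j).+1 => (-1) ^+ i) (fun i : 'I_(N - j).+1 =>
        Uk (N - j - i)%N Om (chain (Uk i Om x) (rev rs))))).
rewrite (@tri _ N (fun i j => (-1) ^+ i *:
   brt br (Uk (N - j - i)%N Om (chain (Uk i Om x) (rev rs))) (Uk j Om a) pi)).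
apply: eq_bigr => i _.
have hz : is_til (chain (Uk i Om x) (rev rs)).
  by apply: is_til_chain; [apply: (is_til_Uk HOm) | apply: alltil_rev].
rewrite rev_cons chain_rcons (Uk_leib' _ hz ha) scaler_sumr.
by apply: eq_bigr => j _; rewrite subnAC.
Qed.

Lemma Yf_V rs N x : alltil rs -> (size rs * m.-1 <= N)%N ->
  Yf N x rs = if N == (size rs * m.-1)%N then chain x (rev (map (Uk m.-1 Om) rs))
              else fun _ => 0.
Proof.
elim: rs N => [|a rs IH] N /=.
  by move=> _ _; rewrite mul0n; case: (N == 0%N).
move=> [ha hrs]; rewrite mulSn => hN.
have em : m.-1.+1 = m := prednK Hm.
set K := (size rs * m.-1)%N in IH hN *.
apply: functional_extensionality => pi.
have zj (j : 'I_N.+1) : (j : nat) <> m.-1 \/ N <> (m.-1 + K)%N ->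
   brt br (Yf (N - j)%N x rs) (Uk j Om a) pi = 0.
  move=> h.
  case: (leqP m j) => mj; first by rewrite (Uk_zero mj ha) brt0r.
  have hK : (K <= N - j)%N by lia.
  rewrite (IH _ hrs hK).
  case: eqP => [e|]; last by rewrite brt0l.
  by exfalso; case: h; lia.
case: eqP => [eN|neN].
  have mN : (m.-1 < N.+1)%N by lia.
  rewrite (bigD1 (Ordinal mN)) //= big1 ?addr0; last first.
    move=> j ne; apply: zj; left; apply/eqP; by move: ne; rewrite -val_eqE.
  have e1 : (N - m.-1)%N = K by lia.
  rewrite e1 (IH _ hrs (leqnn K)) eqxx.
  by rewrite /= rev_cons chain_rcons.
rewrite big1 // => j _.
case: (eqVneq (j : nat) m.-1) => [ej|nej].
  have hK : (K <= N - j)%N by lia.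
  rewrite (IH _ hrs hK).
  case: eqP => [e|]; last by rewrite brt0l.
  by exfalso; apply: neN; lia.
by apply: zj; left; apply/eqP.
Qed.

Lemma is_til_single (a : T) pi0 : is_til a -> is_til (single pi0 (a pi0)).
Proof.
move=> [a0 _]; split.
  rewrite /single; case: eqP => // <-; exact: a0.
exists pi0 => s hs; rewrite /single; case: eqP => // es.
by move: hs; rewrite es fsubset_refl.
Qed.

Lemma alltil_map (X : Type) (f : X -> T) (l : seq X) :
  (forall i, is_til (f i)) -> alltil (map f l).
Proof. by move=> hf; elim: l => //= i l ->; split. Qed.

Theorem part2 : (4 <= m)%N ->
     forall a : til L, is_til a ->
     forall P : seq {fset nat}, uniq P -> (forall pi, (pi \in P) = (a pi != 0)) ->
     let Om' := [seq adt br (Uk m.-1 Om (single pi (a pi))) | pi <- P] in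
     forall k, (m.-1 <= k)%N -> forall x, is_til x -> forall pi, Uk k Om' x pi = 0.
Proof.
move=> m4 a ha P _ _ Om' k hk x hx pi.
rewrite /Uk big1 // => S /eqP cS.
set bs := [seq single (nth fset0 P (val i)) (a (nth fset0 P (val i))) | i <- enum S].
have e : [seq nth (@dzero _ L) Om' (val i) | i <- enum S] =
         map (adt br) (map (Uk m.-1 Om) bs).
  rewrite -!map_comp; apply: eq_map => i /=.
  have hi : (i < size P)%N by rewrite -(size_map (fun pi => adt br (Uk m.-1 Om (single pi (a pi))))); exact: ltn_ord i.
  by rewrite /Om' (nth_map fset0).
rewrite e act_seq_adt.
set rs := rev bs.
have hrs : alltil rs.
  by apply: alltil_rev; apply: alltil_map => i; apply: is_til_single.
have -> : map (Uk m.-1 Om) bs = rev (map (Uk m.-1 Om) rs) by rewrite map_rev revK.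
set N := (size rs * m.-1)%N.
have := Yf_V x hrs (leqnn N); rewrite eqxx => <-.
rewrite (Yf_G N hx hrs) big1 // => i _.
case: (leqP m i) => mi.
  rewrite (Uk_zero mi hx) chain0.
  by rewrite (linT0 (linT_Uk HOm _)) scaler0.
have hsz : size rs = k by rewrite /rs size_rev size_map -cardE cS.
have h3 : (3 * m.-1 <= N)%N by rewrite /N hsz leq_mul2r; apply/orP; right; lia.
have em : m.-1.+1 = m := prednK Hm.
have hNi : (m <= N - i)%N by lia.
rewrite HU ?scaler0 //.
by apply: is_til_chain; [apply: (is_til_Uk HOm) | apply: alltil_rev].
Qed.

End F.

End Aux.
Import Aux.

Theorem lemma34 (F : fieldType) (L : lmodType F) (br : L -> L -> L)
  (HL : lie_alg br) (Om : seq (dtil L))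
  (HOm : forall j, (j < size Om)%N -> is_dtil br (nth (@dzero _ L) Om j))
  (HU1 : U1 Om) (HU2 : U2 Om) (m : nat) (Hm : (1 <= m)%N)
  (HU : forall k, (m <= k)%N -> forall x, is_til x -> forall pi, Uk k Om x pi = 0) :
  ((2 <= m)%N ->
     forall a b : til L, is_til a -> is_til b ->
       forall pi, brt br (Uk m.-1 Om a) (Uk m.-1 Om b) pi = 0)
  /\
  ((4 <= m)%N ->
     forall a : til L, is_til a ->
     forall P : seq {fset nat}, uniq P -> (forall pi, (pi \in P) = (a pi != 0)) ->
     let Om' := [seq adt br (Uk m.-1 Om (single pi (a pi))) | pi <- P] in
     forall k, (m.-1 <= k)%N -> forall x, is_til x -> forall pi, Uk k Om' x pi = 0).
Proof.
split.
  exact: (part1 HL HOm HU1 HU2 Hm HU).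
exact: (part2 HL HOm HU1 HU2 Hm HU).
Qed.
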